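(* Let $G=(V,E)$ be a 4-regular 4-edge-connected graph, let $T$ be a spanning tree of $G$ with no vertex of degree four, rooted at a leaf $r$ of $T$, and let $L=E\setminus T$. Let $G'=(V',E')$, $T'$ and $L'=E'\setminus T'$ be the subdivided graph, tree and links. Then: (1) for any $F'\subseteq L'$ such that $T'+F'$ is 2-edge-connected, $T+F$ is 2-vertex-connected, where $F\subseteq L$ is the set of links corresponding to $F'$; and (2) for every edge $e'\in T'$ there are at least two links $\ell'_1,\ell'_2\in L'$ whose paths in $T'$ contain $e'$.
   Context: For a link $\ell\in L$, $P_\ell$ denotes the path in $T$ between the endpoints of $\ell$. The subdivided graph $G'$ is obtained from $G$ as follows: each tree edge $e=uw\in T$ is subdivided into two edges $uv_e$ and $v_ew$ with a new vertex $v_e$, and $T'$ consists of all these edges. For each link $\ell\in L$ a link $\ell'\in L'$ is created: for each endpoint $u$ of $\ell$, if $u$ is the root or a leaf of $T$ then $u$ is an endpoint of $\ell'$; if $u$ is an internal vertex of $T$, let $e$ be the (unique) edge of $P_\ell$ incident to $u$, and then $v_e$ is an endpoint of $\ell'$. This gives a bijection $\ell\leftrightarrow\ell'$ between $L$ and $L'$, and for $F'\subseteq L'$, $F$ denotes the corresponding subset of $L$. $T+F$ denotes the graph $(V,T\cup F)$. *)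

(* Defs.v *)
From mathcomp Require Import all_boot.
Set Implicit Arguments. Unset Strict Implicit. Unset Printing Implicit Defensive.

Section Graphs.
Variable W : finType.
Implicit Types (E F : {set {set W}}) (e : {set W}).

Definition is_edgeset E : Prop := forall e, e \in E -> #|e| = 2.

Definition adj E : rel W := fun u v => [set u; v] \in E.

Definition deg E (v : W) : nat := #|[set e in E | v \in e]|.

Definition connected E : Prop := forall u v, connect (adj E) u v.

Definition k_edge_connected (k : nat) E : Prop :=
  forall S : {set {set W}}, S \subset E -> #|S| < k -> connected (E :\: S).

Definition k_vertex_connected (k : nat) E : Prop :=
  k < #|W| /\
  forall X : {set W}, #|X| < k ->
    forall u v, u \notin X -> v \notin X ->
      connect (fun a b => [&& a \notin X, b \notin X & adj E a b]) u v.

Definition acyclic E : Prop :=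
  forall s : seq W, 2 < size s -> uniq s -> ~~ cycle (adj E) s.

Definition is_tree E : Prop := connected E /\ acyclic E.

(* edge e lies on the (simple) path of (W, F) from x to y; in a tree this is
   the unique path between x and y *)
Definition on_tree_path F (x y : W) e : Prop :=
  exists p : seq W, [/\ path (adj F) x p, last x p = y, uniq (x :: p) &
    e \in [seq [set a.1; a.2] | a <- zip (x :: p) p]].

Definition on_link_path F (l : {set W}) e : Prop :=
  exists x y, [/\ x != y, l = [set x; y] & on_tree_path F x y e].

End Graphs.

Section Subdivision.
Variables (V : finType) (T : {set {set V}}) (r : V).

(* the edges of T, used as the subdivision vertices v_e *)
Definition tedge := {e : {set V} | e \in T}.

(* vertex set V' of the subdivided graph: V plus one new vertex v_e per e in T *)
Definition subV := (V + tedge)%type.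

(* T' : each tree edge uw is replaced by u v_e and v_e w *)
Definition sub_tree : {set {set subV}} :=
  [set [set (inl u : subV); inr e] | u in [set: V], e in [set: tedge] & u \in val e].

Definition internal (u : V) : bool := (u != r) && (deg T u != 1).

(* x is the endpoint of l' associated with the endpoint u of the link
   l = uw (P_l is the tree path from u to w) *)
Definition end_img (u w : V) (x : subV) : Prop :=
  (~~ internal u /\ x = inl u) \/
  (internal u /\ exists e : tedge,
      [/\ u \in val e, on_tree_path T u w (val e) & x = inr e]).

Definition corr (l : {set V}) (l' : {set subV}) : Prop :=
  exists u w, [/\ u != w, l = [set u; w] &
    exists x y, [/\ end_img u w x, end_img w u y & l' = [set x; y]]].

End Subdivision.

Arguments sub_tree {V} T.
Arguments internal {V} T r u.
Arguments end_img {V} T r u w x.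
Arguments corr {V} T r l l'.
Arguments on_link_path {W} F l e.
Arguments on_tree_path {W} F x y e.

(* Main.v *)
Require Import Defs.
From mathcomp Require Import all_boot.
From Stdlib Require Import Lia.
From mathcomp Require Import zify.
Set Implicit Arguments. Unset Strict Implicit. Unset Printing Implicit Defensive.

Section Gen.
Variable W : finType.
Implicit Types (E F : {set {set W}}).

Lemma adjC F a b : adj F a b = adj F b a.
Proof. by rewrite /adj setUC. Qed.

Lemma adj_sym F : symmetric (adj F).
Proof. by move=> a b; rewrite adjC. Qed.

Lemma set2_eq (a b c d : W) : [set a; b] = [set c; d] ->
  (a = c /\ b = d) \/ (a = d /\ b = c).
Proof.
move=> H.
have ha : a \in [set c; d] by rewrite -H !inE eqxx.
have hb : b \in [set c; d] by rewrite -H !inE eqxx orbT.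
have hc : c \in [set a; b] by rewrite H !inE eqxx.
have hd : d \in [set a; b] by rewrite H !inE eqxx orbT.
move: ha hb hc hd; rewrite !inE.
by do ! case/orP=> /eqP ?; subst; auto.
Qed.

Lemma card2_set2 (e : {set W}) a : #|e| = 2 -> a \in e ->
  exists b, a != b /\ e = [set a; b].
Proof.
move/eqP/cards2P=> [x [y [xy ->]]]; rewrite !inE => /orP[]/eqP->.
  by exists y.
by exists x; split; [rewrite eq_sym | rewrite setUC].
Qed.

Lemma connect_closed' (e : rel W) (P : pred W) :
  (forall a b, P a -> e a b -> P b) -> forall x y, connect e x y -> P x -> P y.
Proof.
move=> H x y /connectP [p pth ->].
elim: p x pth => //= a p IH x /andP [exa pth] Px.
exact: IH _ pth (H _ _ Px exa).
Qed.

Lemma connect_mono_inv (e1 e2 : rel W) (P : pred W) :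
  (forall a b, P a -> e1 a b -> P b && e2 a b) ->
  forall x y, P x -> connect e1 x y -> connect e2 x y.
Proof.
move=> H x y Px /connectP [p pth ->].
elim: p x Px pth => /= [|a p IH] x Px; first by rewrite connect0.
case/andP=> e1xa pth; case/andP: (H _ _ Px e1xa) => Pa e2xa.
exact: connect_trans (connect1 e2xa) (IH _ Pa pth).
Qed.

Lemma path_closed (e : rel W) (P : pred W) :
  (forall a b, P a -> e a b -> P b) -> forall x s, path e x s -> P x -> all P s.
Proof.
move=> H x s; elim: s x => //= a s IH x /andP[exa pth] Px.
have Pa := H _ _ Px exa. by rewrite Pa (IH a).
Qed.

Definition avoid F (z : W) : rel W := fun c d => [&& c != z, d != z & adj F c d].

Lemma avoid_sym F z : symmetric (avoid F z).
Proof. by move=> a b; rewrite /avoid adjC andbCA. Qed.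

Lemma path_avoid F (z : W) b s : path (adj F) b s -> z \notin b :: s ->
  path (avoid F z) b s.
Proof.
elim: s b => //= c s IH b /andP[hbc pth].
rewrite inE negb_or => /andP[zb]; rewrite inE negb_or => /andP[zc zs].
rewrite /avoid eq_sym zb eq_sym zc hbc /=; apply: IH => //.
by rewrite inE negb_or zc.
Qed.

Definition pairs (s : seq W) := [seq [set c.1; c.2] | c <- zip s (behead s)].

Lemma pairs_cons2 x y s : pairs [:: x, y & s] = [set x; y] :: pairs (y :: s).
Proof. by []. Qed.

Lemma pairsP s (e : {set W}) : e \in pairs s <->
  exists s1 a b s2, s = s1 ++ [:: a, b & s2] /\ e = [set a; b].
Proof.
split.
  elim: s => // x s IH; case: s IH => // y s IH.
  rewrite pairs_cons2 inE => /orP[/eqP->|/IH [s1 [a [b [s2 [-> ->]]]]]].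
    by exists [::], x, y, s.
  by exists (x :: s1), a, b, s2.
case=> s1 [a [b [s2 [-> ->]]]].
elim: s1 => [|x s1 IH]; first by rewrite /= pairs_cons2 mem_head.
case: s1 IH => [|y s1] IH /=; first by rewrite pairs_cons2 inE IH orbT.
by rewrite pairs_cons2 inE IH orbT.
Qed.

Lemma first_edge F x p y (e : {set W}) : path (adj F) x p -> uniq (x :: p) -> last x p = y ->
  x \in e -> e \in pairs (x :: p) ->
  exists b p', [/\ p = b :: p', e = [set x; b] & connect (avoid F x) b y].
Proof.
case: p => [|b p] // pth u ly xe.
rewrite pairs_cons2 inE => /orP[/eqP ee|].
  exists b, p; split => //; apply/connectP; exists p => //.
  apply: path_avoid; first by case/andP: pth.
  by case/andP: u.
case/pairsP => [s1 [c [d [s2 [hs he]]]]].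
move: u; rewrite /= hs; case/andP => + _.
by move: xe; rewrite he !inE => /orP[]/eqP->; rewrite !mem_cat !inE eqxx ?orbT.
Qed.

Lemma on_tree_path_sym F x y (e : {set W}) : on_tree_path F x y e -> on_tree_path F y x e.
Proof.
case=> p [pth ly u pe].
exists (rev (belast x p)); split.
- rewrite -ly rev_path. by apply: sub_path pth => a b; rewrite adjC.
- by rewrite -ly; case: (p) => //= b q; rewrite rev_cons last_rcons.
- by rewrite -ly -rev_rcons -lastI rev_uniq.
- have : e \in pairs (x :: p) by [].
  case/pairsP => [s1 [a [b [s2 [hs he]]]]].
  suff : e \in pairs (y :: rev (belast x p)) by [].
  have -> : y :: rev (belast x p) = rev (x :: p) by rewrite -ly [x :: p]lastI rev_rcons.
  apply/pairsP; exists (rev s2), b, a, (rev s1); split; last by rewrite he setUC.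
  by rewrite hs rev_cat /= !rev_cons -!cats1 -!catA.
Qed.


Lemma adj_sub F (G : {set {set W}}) a b : F \subset G -> adj F a b -> adj G a b.
Proof. by move=> /subsetP h /h. Qed.

Lemma adjD1 F (g : {set W}) a b : adj (F :\ g) a b = ([set a; b] != g) && adj F a b.
Proof. by rewrite /adj in_setD1. Qed.

Lemma tree_cut (T : {set {set W}}) : acyclic T -> forall a b, [set a; b] \in T -> a != b ->
  connect (adj (T :\ [set a; b])) a b -> False.
Proof.
move=> hac a b hT ab /connectP [p0 pth0 l0].
move: l0; case: (shortenP pth0) => p pth u _ lp.
case: p pth u lp => [|c [|d p]] pth u lp.
- by move: ab; rewrite lp eqxx.
- by move: lp pth => /= -> /andP[]; rewrite adjD1 eqxx.
- apply: (negP (hac (a :: c :: d :: p) _ u)) => //.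
  rewrite /cycle rcons_path; apply/andP; split.
    by apply: sub_path pth => x y; rewrite adjD1 => /andP[].
  by rewrite -lp /adj setUC.
Qed.

Lemma avoid_adjD1 F x b c d : x != b -> avoid F x c d -> adj (F :\ [set x; b]) c d.
Proof.
move=> xb /and3P[cx dx h]; rewrite adjD1 h andbT.
apply/negP => /eqP /set2_eq [[? ?]|[? ?]]; subst.
  by rewrite eqxx in cx.
by rewrite eqxx in dx.
Qed.

Lemma inj_core (T : {set {set W}}) : acyclic T -> forall a b qa qb,
  [set a; b] \in T -> a != b ->
  on_tree_path T a qa [set a; b] -> on_tree_path T b qb [set a; b] ->
  connect (adj (T :\ [set a; b])) qa qb -> False.
Proof.
move=> hac a b qa qb hT ab [pa [pa1 pa2 pa3 pa4]] [pb [pb1 pb2 pb3 pb4]] cq.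
have sym := adj_sym (T :\ [set a; b]).
have [c [p' [_ hc ca]]] := first_edge pa1 pa3 pa2 (set21 a b) pa4.
have cb : c = b.
  case/set2_eq: hc => [[_ ->]|[_ ba]] //.
  by rewrite ba eqxx in ab.
subst c.
have [c' [p'' [_ hc' cb']]] := first_edge pb1 pb3 pb2 (set22 a b) pb4.
have ca' : c' = a.
  case/set2_eq: hc' => [[ab' _]|[-> _]] //.
  by rewrite ab' eqxx in ab.
subst c'.
apply: (tree_cut hac hT ab).
have h1 : connect (adj (T :\ [set a; b])) b qa.
  apply: (connect_mono_inv (P := predT)) ca => // c d _ h.
  exact: avoid_adjD1 ab h.
have h2 : connect (adj (T :\ [set a; b])) a qb.
  apply: (connect_mono_inv (P := predT)) cb' => // c d _ h.
  rewrite setUC; apply: avoid_adjD1 h; by rewrite eq_sym.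
have cs := sym_connect_sym sym.
apply: connect_trans h2 _; rewrite cs.
exact: connect_trans h1 cq.
Qed.

End Gen.

Section Sub.
Variables (V : finType) (T : {set {set V}}).

Lemma mem_subtree (z : {set subV T}) : z \in sub_tree T <->
  exists c (f : tedge T), c \in val f /\ z = [set inl c; inr f].
Proof.
split.
  by case/imset2P => c f _ hf ->; exists c, f; move: hf; rewrite !inE.
case=> c [f [cf ->]]; apply/imset2P; exists c f => //; by rewrite !inE cf.
Qed.

Lemma subtree_edge c (f : tedge T) : c \in val f -> [set inl c; inr f] \in sub_tree T.
Proof. by move=> h; apply/mem_subtree; exists c, f. Qed.

Definition step (a b : V) : seq (subV T) :=
  match (insub [set a; b] : option (tedge T)) with
  | Some f => [:: inr f; inl b] | None => [:: inl b] end.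

Lemma step_T a b (h : [set a; b] \in T) :
  step a b = [:: inr (Sub [set a; b] h : tedge T); inl b].
Proof. by rewrite /step insubT. Qed.

Lemma step_cases a b :
  (exists f : tedge T, val f = [set a; b] /\ step a b = [:: inr f; inl b])
  \/ step a b = [:: inl b].
Proof.
rewrite /step; case: insubP => [f _ <-|_]; [left; exists f|right]; by [].
Qed.

Fixpoint lift (a : V) (p : seq V) : seq (subV T) :=
  if p is b :: p' then step a b ++ lift b p' else [::].

Lemma lift_cat a p q : lift a (p ++ q) = lift a p ++ lift (last a p) q.
Proof. by elim: p a => //= b p IH a; rewrite IH catA. Qed.

Lemma last_step x a b : last x (step a b) = inl b.
Proof. by case: (step_cases a b) => [[f [_ ->]]|->]. Qed.

Lemma lift_last a p : last (inl a) (lift a p) = inl (last a p).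
Proof. by elim: p a => //= b p IH a; rewrite last_cat last_step IH. Qed.

Lemma lift_rcons a p b : lift a (rcons p b) = lift a p ++ step (last a p) b.
Proof. by rewrite -cats1 lift_cat /= cats0. Qed.

Lemma lift_path a p : path (adj T) a p -> path (adj (sub_tree T)) (inl a) (lift a p).
Proof.
elim: p a => //= b p IH a /andP[hab pth].
rewrite cat_path last_step IH // andbT (step_T hab) /= /adj.
rewrite subtree_edge ?inE ?eqxx //= setUC subtree_edge //.
by rewrite !inE eqxx orbT.
Qed.

Lemma lift_inl a p c : inl c \in lift a p -> c \in p.
Proof.
elim: p a => //= b p IH a; rewrite mem_cat inE => /orP[|/IH ->]; last by rewrite orbT.
case: (step_cases a b) => [[f [_ ->]]|->]; rewrite !inE.
  by case/orP => /eqP // [->]; rewrite eqxx.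
by move=> /eqP [->]; rewrite eqxx.
Qed.

Lemma lift_inr a p (f : tedge T) : inr f \in lift a p -> {subset val f <= a :: p}.
Proof.
elim: p a => //= b p IH a; rewrite mem_cat => /orP[|/IH h].
  case: (step_cases a b) => [[g [hg ->]]|->]; rewrite !inE; last by move/eqP.
  case/orP => /eqP; last by [].
  case=> ->; rewrite hg => c; rewrite !inE.
  by case/orP=> ->; rewrite ?orbT.
by move=> c /h; rewrite !inE => ->; rewrite orbT.
Qed.

Lemma lift_uniq a p : uniq (a :: p) -> uniq (inl a :: lift a p).
Proof.
elim: p a => //= b p IH a; rewrite inE negb_or => /andP[/andP[ab ap] /andP[bp up]].
have IHb := IH b; rewrite /= bp up in IHb; have {IHb} /andP[nb ul] := IHb isT.
have nal : inl a \notin lift b p by apply/negP => /lift_inl; rewrite (negbTE ap).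
have nab : inl a != inl b :> subV T by apply/eqP => -[/eqP]; rewrite (negbTE ab).
case: (step_cases a b) => [[f [hf ->]]|->] /=.
- rewrite nb ul !in_cons !negb_or (negbTE nal) (negbTE nab) /= andbT.
  apply/negP => /lift_inr h.
  by have := h a; rewrite hf !inE eqxx => /(_ isT); rewrite (negbTE ab) (negbTE ap).
- by rewrite nb ul in_cons negb_or nal nab.
Qed.


Definition stepB (a b : V) : seq (subV T) :=
  match (insub [set a; b] : option (tedge T)) with
  | Some f => [:: inr f] | None => [::] end.

Fixpoint liftB (a : V) (p : seq V) : seq (subV T) :=
  match p with
  | [::] => [::]
  | b :: p' => if p' is [::] then stepB a b else step a b ++ liftB b p'
  end.

Lemma stepB_T a b (h : [set a; b] \in T) :
  stepB a b = [:: inr (Sub [set a; b] h : tedge T)].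
Proof. by rewrite /stepB insubT. Qed.

Lemma lift_liftB a p : path (adj T) a p -> p != [::] ->
  lift a p = rcons (liftB a p) (inl (last a p)).
Proof.
elim: p a => // b p IH a /= /andP[hab pth] _.
case: p IH pth => [|c p] IH pth; first by rewrite (step_T hab) (stepB_T hab).
by rewrite IH // rcons_cat.
Qed.

Lemma lift_head a b p (h : [set a; b] \in T) :
  lift a (b :: p) = [:: inr (Sub [set a; b] h : tedge T), inl b & lift b p].
Proof. by rewrite /= (step_T h). Qed.

Lemma liftB_head a b p (h : [set a; b] \in T) :
  exists B, liftB a (b :: p) = inr (Sub [set a; b] h : tedge T) :: B.
Proof.
case: p => [|c p] /=; first by rewrite (stepB_T h); exists [::].
by rewrite (step_T h); eexists.
Qed.

Lemma liftB_last a p x : path (adj T) a p -> p != [::] ->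
  exists G : tedge T, [/\ last x (liftB a p) = inr G, last a p \in val G
    & val G \in pairs (a :: p)].
Proof.
elim: p a x => // b p IH a x /= /andP[hab pth] _.
case: p IH pth => [|c p] IH pth.
  rewrite (stepB_T hab); exists (Sub [set a; b] hab); split => //=.
    by rewrite !inE eqxx orbT.
  by rewrite /pairs /= inE.
have [G [h1 h2 h3]] := IH b (last x (step a b)) pth isT.
exists G; split => //; first by rewrite last_cat.
by rewrite pairs_cons2 inE h3 orbT.
Qed.

End Sub.

Lemma not_disjointP (W : finType) (A B : {set W}) :
  ~~ [disjoint A & B] -> exists2 x, x \in A & x \in B.
Proof. by rewrite -setI_eq0 => /set0Pn [x]; rewrite inE => /andP[]; exists x. Qed.

Lemma not_disjoint (W : finType) (A B : {set W}) x : x \in A -> x \in B -> ~~ [disjoint A & B].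
Proof. by move=> xa xb; apply/negP => /disjointFr /(_ xa); rewrite xb. Qed.

Section Part1.
Variables (V : finType) (E T : {set {set V}}) (r : V).
Hypothesis hE : is_edgeset E.
Hypothesis hTE : T \subset E.

Lemma edgeT f : f \in T -> #|f| = 2.
Proof. by move=> h; apply: hE; apply: (subsetP hTE). Qed.

Variables (F' : {set {set subV T}}) (F : {set {set V}}).
Hypothesis hF' : forall l', l' \in F' -> exists l, l \in E :\: T /\ corr T r l l'.
Hypothesis hk : k_edge_connected 2 (sub_tree T :|: F').
Hypothesis hFsub : F \subset E :\: T.
Hypothesis hiff : forall l, l \in E :\: T -> (l \in F <-> exists l', l' \in F' /\ corr T r l l').

Variables (C : {set V}) (u v : V).
Hypothesis vC : v \notin C.
Hypothesis uC : u \in C.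
Hypothesis huv : [set u; v] \in T.
Hypothesis uniqu : forall c, c \in C -> [set c; v] \in T -> c = u.
Hypothesis closC : forall a b, a \in C -> b != v -> adj (T :|: F) a b -> b \in C.
Hypothesis intv : internal T r v.

Let S := [pred z : subV T | match z with inl a => a \in C | inr f => ~~ [disjoint val f & C] end].

Lemma closT a b : a \in C -> avoid T v a b -> b \in C.
Proof.
move=> aC /and3P[_ bv h]; apply: closC aC bv _.
by move: h; rewrite /adj inE => ->.
Qed.

Lemma H2 p q y : q \in C -> end_img T r q p y -> S y.
Proof.
move=> qC [[_ ->]|[_ [g [qg _ ->]]]] //=.
exact: not_disjoint qg qC.
Qed.

Lemma H1 p q x y : p != q -> [set p; q] \in F -> end_img T r p q x -> end_img T r q p y ->
  S x -> S y.
Proof.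
move=> pq pqF hx hy Sx.
have step1 : p \in C \/ (p = v /\ q \in C).
  case: hx Sx => [[_ ->]|[ip [f [pf otp ->]]]] /=; first by left.
  case/not_disjointP => c0 c0f c0C.
  have [d [c0d hfd]] := card2_set2 (edgeT (valP f)) c0f.
  move: pf; rewrite hfd !inE => /orP[/eqP->|/eqP pd]; first by left.
  have fT : [set c0; d] \in T by rewrite -hfd (valP f).
  case: (eqVneq d v) => dv; last first.
    left; rewrite pd; apply: closC c0C dv _.
    by rewrite /adj inE fT.
  right; split; first by rewrite pd.
  subst p d.
  have c0u := uniqu c0C fT; subst c0.
  case: otp => pp [pth lp up pe].
  have vf : v \in val f by rewrite hfd !inE eqxx orbT.
  have [b1 [p' [_ hb1 cb1]]] := first_edge pth up lp vf pe.
  have b1u : b1 = u.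
    move: hb1; rewrite hfd => /set2_eq [[uv _]|[-> _]] //.
    by move: vC; rewrite -uv uC.
  subst b1.
  exact: (connect_closed' (P := fun z => z \in C) closT cb1) uC.
case: step1 => [pC|[_ qC]]; last exact: H2 qC hy.
case: (eqVneq q v) => qv; last first.
  apply: H2 (closC pC qv _) hy.
  by rewrite /adj inE pqF orbT.
subst q.
case: hy => [[niv _]|[_ [g [vg otp ->]]]]; first by rewrite intv in niv.
case: otp => pp [pth lp up pe].
have [b1 [p' [_ hb1 cb1]]] := first_edge pth up lp vg pe.
rewrite /= hb1; apply: (not_disjoint (x := b1)); first by rewrite !inE eqxx orbT.
rewrite (sym_connect_sym (avoid_sym T v)) in cb1.
exact: (connect_closed' (P := fun z => z \in C) closT cb1) pC.
Qed.

Lemma part1_core : False.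
Proof.
pose e0 : tedge T := Sub [set u; v] huv.
pose estar : {set subV T} := [set inl v; inr e0].
have hst : estar \in sub_tree T by apply: subtree_edge; rewrite /= !inE eqxx orbT.
have := hk (S := [set estar]).
rewrite sub1set inE hst cards1 => /(_ isT isT (inl u) (inl v)) cc.
suff : S (inl v) by rewrite /= (negbTE vC).
apply: (connect_closed' _ cc); last by [].
move=> a b Sa; rewrite /adj in_setD in_set1 in_setU => /andP[ne /orP[hT'|hFF]].
- case/mem_subtree: hT' => c [f [cf /set2_eq [[? ?]|[? ?]]]]; subst a b.
    by move: Sa => /= cC; apply: not_disjoint cf cC.
  move: Sa => /= /not_disjointP [c0 c0f c0C].
  have [d [c0d hfd]] := card2_set2 (edgeT (valP f)) c0f.
  move: cf; rewrite hfd !inE => /orP[/eqP->//|/eqP cd]; subst c.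
  have fT : [set c0; d] \in T by rewrite -hfd (valP f).
  case: (eqVneq d v) => dv; last first.
    by apply: closC c0C dv _; rewrite /adj inE fT.
  subst d; have c0u := uniqu c0C fT; subst c0.
  have fe : f = e0 by apply: val_inj; rewrite /= hfd.
  by move: ne; rewrite fe setUC eqxx.
- have [l [hl hc]] := hF' hFF.
  have lF : l \in F by apply/(hiff hl); exists [set a; b].
  move: hc => [p [q [pq hlpq [x [y [hx hy hxy]]]]]].
  case/set2_eq: hxy => [[? ?]|[? ?]]; subst a b.
    by apply: (H1 pq _ hx hy Sa); rewrite -hlpq.
  by apply: (H1 _ _ hy hx Sa); rewrite 1?eq_sym // setUC -hlpq.
Qed.

End Part1.

Lemma reach_nb (W : finType) (F : {set {set W}}) x z :
  connect (adj F) x z -> x != z -> exists w, adj F w z /\ connect (avoid F z) x w.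
Proof.
move=> /connectP [p pth ->]; elim: p x pth => /= [|a p IH] x; first by rewrite eqxx.
case/andP=> hxa pth xz.
case: (eqVneq a (last a p)) => az.
  by exists x; split; [rewrite -az | rewrite connect0].
have [w [hw cw]] := IH a pth az.
exists w; split => //; apply: connect_trans cw.
by apply: connect1; rewrite /avoid xz az hxa.
Qed.

Lemma connect_last_notin (W : finType) (X : {set W}) (e : rel W) x c :
  connect (fun a b => [&& a \notin X, b \notin X & e a b]) x c -> x != c -> c \notin X.
Proof.
move=> /connectP [p pth ->]; case/lastP: p pth => [|p b]; first by rewrite eqxx.
by rewrite rcons_path last_rcons => /andP[_ /and3P[]].
Qed.

Lemma disj2 (W : finType) (A : {set W}) a b : a \notin A -> b \notin A -> [disjoint [set a; b] & A].
Proof.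
move=> aA bA; rewrite -setI_eq0; apply/eqP/setP => c; rewrite !inE.
by apply/negP => /andP[/orP[]/eqP-> h]; [rewrite h in aA | rewrite h in bA].
Qed.

Lemma deg_le (V : finType) (E T : {set {set V}}) v : T \subset E -> deg T v <= deg E v.
Proof.
move=> hTE; apply: subset_leq_card; apply/subsetP => f; rewrite !inE => /andP[h ->].
by rewrite (subsetP hTE _ h).
Qed.

Lemma card_V (V : finType) (E : {set {set V}}) v : is_edgeset E -> deg E v = 4 -> 4 <= #|V|.
Proof.
move=> hE hd.
have : [set e in E | v \in e] \subset [set [set v; w] | w in V].
  apply/subsetP => f; rewrite inE => /andP[fE vf].
  have [b [_ ->]] := card2_set2 (hE _ fE) vf.
  by apply/imsetP; exists b.
move/subset_leq_card; rewrite -/(deg E v) hd => h.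
apply: leq_trans h _; exact: leq_imset_card.
Qed.

Lemma part1 (V : finType) (E T : {set {set V}}) (r : V) :
  is_edgeset E ->
  (forall v : V, deg E v = 4) ->
  T \subset E -> is_tree T ->
  (forall v : V, deg T v != 4) ->
  deg T r = 1 ->
  (forall F' : {set {set subV T}},
     (forall l', l' \in F' -> exists l, l \in E :\: T /\ corr T r l l') ->
     k_edge_connected 2 (sub_tree T :|: F') ->
     forall F : {set {set V}}, F \subset E :\: T ->
     (forall l, l \in E :\: T -> (l \in F <-> exists l', l' \in F' /\ corr T r l l')) ->
     k_vertex_connected 2 (T :|: F)).
Proof.
move=> hE h4 hTE [Tcon Tac] hT4 hr F' hF' hk F hFsub hiff.
split; first by have := card_V hE (h4 r); lia.
move=> X; rewrite ltnS leq_eqVlt ltnS leqn0 => /orP[/cards1P [z ->]|/eqP/cards0_eq ->] x y xX yX.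
- apply/negPn/negP => /negP ncon.
  set R := (fun a b => _) in ncon.
  have Rsym : symmetric R.
    by move=> a b; rewrite /R adjC; do 2 case: (_ \notin _).
  have cs := sym_connect_sym Rsym.
  have avR a b : avoid T z a b -> R a b.
    by case/and3P => az bz; rewrite /R !inE az bz /= /adj inE => ->.
  have xz : x != z by move: xX; rewrite inE.
  have yz : y != z by move: yX; rewrite inE.
  have [nA [hnA cnA]] := reach_nb (Tcon x z) xz.
  have [nB [hnB cnB]] := reach_nb (Tcon y z) yz.
  have {}cnA : connect R x nA by apply: (connect_mono_inv (P := predT)) cnA => // a b _ /avR ->.
  have {}cnB : connect R y nB by apply: (connect_mono_inv (P := predT)) cnB => // a b _ /avR ->.
  pose A := [set c | connect R x c].
  have zA : z \notin A.
    rewrite inE; apply/negP => h; have := connect_last_notin h xz; by rewrite inE eqxx.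
  have nBA : nB \notin A.
    rewrite inE; apply/negP => h; apply: ncon; apply: connect_trans h _; by rewrite cs.
  have nAA : nA \in A by rewrite inE.
  pose Ez := [set f in T | z \in f].
  pose EA := [set f in Ez | ~~ [disjoint f & A]].
  pose EB := Ez :\: EA.
  have hEz : #|Ez| <= 3.
    have h1 := deg_le z hTE; have h2 := hT4 z; rewrite h4 in h1.
    rewrite leq_eqVlt ltnS in h1; case/orP: h1 => [/eqP h|//].
    by rewrite h in h2.
  have {}hnA : [set nA; z] \in T := hnA.
  have {}hnB : [set nB; z] \in T := hnB.
  have eA : [set nA; z] \in EA.
    by rewrite !inE hnA /= eqxx orbT /=; apply: (not_disjoint (x := nA)); rewrite ?inE ?eqxx.
  have eB : [set nB; z] \in EB.
    by rewrite !inE disj2 //= hnB eqxx orbT.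
  have subA : EA \subset Ez by apply/subsetP => f; rewrite inE => /andP[].
  have hcard : #|EA| + #|EB| = #|Ez| by rewrite -(cardsID EA Ez) (setIidPr subA).
  have cA : 0 < #|EA| by apply/card_gt0P; exists [set nA; z].
  have cB : 0 < #|EB| by apply/card_gt0P; exists [set nB; z].
  have dz : deg T z = #|Ez| by [].
  have zint : internal T r z.
    rewrite /internal; apply/andP; split.
      apply/eqP => zr; move: hr; rewrite -zr dz -hcard => h1.
      by move: (#|EA|) (#|EB|) cA cB h1 => a b; clear; lia.
    rewrite dz -hcard; apply/eqP => h1.
    by move: (#|EA|) (#|EB|) cA cB h1 => a b; clear; lia.
  have edge_ne c : [set c; z] \in T -> c != z.
    move=> h; apply/eqP => cz; have := edgeT hE hTE h; by rewrite cz setUid cards1.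
  have [leA|leB] : #|EA| <= 1 \/ #|EB| <= 1.
    by move: hEz; rewrite -hcard; move: (#|EA|) (#|EB|) => a b; clear; lia.
  + apply: (part1_core hE hTE hF' hk hiff (C := A) (u := nA) (v := z)) => //.
    * move=> c cA' hc; have ec : [set c; z] \in EA.
        by rewrite !inE hc eqxx orbT /=; apply: (not_disjoint (x := c)) => //; rewrite !inE eqxx.
      move/card_le1_eqP: leA => /(_ _ _ ec eA) /set2_eq; by case=> [[]|[]] ->.
    * move=> a b aA bz hab; rewrite inE; apply: connect_trans (_ : connect R x a) _.
        by move: aA; rewrite inE.
      have az : a != z by apply/eqP => az; move: aA; rewrite az (negbTE zA).
      by apply: connect1; rewrite /R !inE az bz hab.
  + apply: (part1_core hE hTE hF' hk hiff (C := [set c | ~~ connect R x c & c != z]) (u := nB) (v := z)) => //.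
    * by rewrite inE eqxx andbF.
    * by rewrite inE; move: nBA; rewrite inE => -> /=; apply: edge_ne.
    * move=> c; rewrite inE => /andP[c_nA cz] hc; have ec : [set c; z] \in EB.
        have dj : [disjoint [set c; z] & A] by apply: disj2 => //; rewrite inE.
        by rewrite !inE dj hc eqxx orbT.
      move/card_le1_eqP: leB => /(_ _ _ ec eB) /set2_eq; by case=> [[]|[]] ->.
    * move=> a b; rewrite !inE => /andP[na az] bz hab; rewrite bz andbT.
      apply/negP => cb; move/negP: na; apply; apply: connect_trans cb _.
      by apply: connect1; rewrite /R !inE az bz adjC hab.
- apply: (connect_mono_inv (P := predT)) (Tcon x y) => // a b _.
  by rewrite !inE /adj inE => ->.
Qed.


Section Trim.
Variable W : finType.
Implicit Types (F : {set {set W}}) (e : {set W}).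

Lemma otp_head F x z M y e : path (adj F) x (z :: M) -> last x (z :: M) = y ->
  uniq (x :: z :: M) -> e \in pairs (x :: z :: M) -> e != [set x; z] ->
  on_tree_path F z y e.
Proof.
move=> /= /andP[_ pth] ly /andP[_ u]; rewrite pairs_cons2 inE => /orP[/eqP->|h];
  first by rewrite eqxx.
by move=> _; exists M; split.
Qed.

Lemma otp_tail F x M a e : path (adj F) x (rcons M a) ->
  uniq (x :: rcons M a) -> e \in pairs (x :: rcons M a) -> e != [set last x M; a] ->
  [/\ path (adj F) x M, uniq (x :: M) & e \in pairs (x :: M)].
Proof.
rewrite rcons_path => /andP[pth _].
rewrite -rcons_cons rcons_uniq => /andP[_ u].
move=> /pairsP [s1 [c [d [s2 [hs he]]]]] hne.
split => //; case/lastP: s2 hs => [|s2 z] hs.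
  move: hs; rewrite -cat_rcons cats1 => /rcons_inj [h1 h2]; subst d.
  have := congr1 (last x) h1; rewrite /= last_rcons => lc.
  by move: hne; rewrite he lc eqxx.
move: hs; rewrite -rcons_cons -!rcons_cons -rcons_cat => /rcons_inj [h1 _].
by apply/pairsP; exists s1, c, d, s2.
Qed.

End Trim.

Section Part2.
Variables (V : finType) (E T : {set {set V}}) (r : V).
Hypothesis hE : is_edgeset E.
Hypothesis h4 : forall v, deg E v = 4.
Hypothesis hk4 : k_edge_connected 4 E.
Hypothesis hTE : T \subset E.
Hypothesis Tcon : connected T.
Hypothesis Tac : acyclic T.

Definition Delta (K : {set V}) := [set f in E | ~~ [disjoint f & K] && ~~ (f \subset K)].

Lemma cut4 (K : {set V}) a b : a \in K -> b \notin K -> 4 <= #|Delta K|.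
Proof.
move=> aK bK; rewrite leqNgt; apply/negP => h.
have sub : Delta K \subset E by apply/subsetP => f; rewrite inE => /andP[].
suff cl : forall c d, c \in K -> adj (E :\: Delta K) c d -> d \in K.
  by have := connect_closed' (P := fun z => z \in K) cl (hk4 sub h a b) aK; rewrite (negbTE bK).
move=> c d cK; rewrite /adj in_setD => /andP[/negP hn fE]; apply/negPn/negP => dK.
apply: hn; rewrite inE fE /=; apply/andP; split.
  by apply: (not_disjoint (x := c)); rewrite ?inE ?eqxx.
by apply/negP => /subsetP /(_ d); rewrite !inE eqxx orbT (negbTE dK) => /(_ isT).
Qed.


Lemma edgeT2 f : f \in T -> #|f| = 2.
Proof. by move=> h; apply: hE; apply: (subsetP hTE). Qed.

Lemma same_img a1 b1 a2 b2 x : end_img T r a1 b1 x -> end_img T r a2 b2 x ->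
  a1 = a2 \/ exists f : tedge T, [/\ x = inr f, val f = [set a1; a2], a1 != a2,
     on_tree_path T a1 b1 (val f) & on_tree_path T a2 b2 (val f)].
Proof.
case=> [[_ ->]|[_ [f [af otf ->]]]] [[_ h]|[_ [f' [af' otf' h]]]] //.
- by case: h => ->; left.
- case: h => ?; subst f'.
  case: (eqVneq a1 a2) => [->|ne]; [by left|right].
  exists f; split => //.
  have [b [ab hb]] := card2_set2 (edgeT2 (valP f)) af.
  move: af'; rewrite hb !inE => /orP[]/eqP h; first by rewrite h eqxx in ne.
  by rewrite h.
Qed.

Section Edge.
Variables (e : tedge T) (u w : V).
Hypothesis hew : val e = [set u; w].
Hypothesis uw : u != w.

Let g := [set u; w].
Definition Cs := [set z | connect (adj (T :\ g)) u z].

Lemma eT : g \in T. Proof. by rewrite /g -hew (valP e). Qed.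

Lemma symG : symmetric (adj (T :\ g)). Proof. exact: adj_sym. Qed.
Let cs := sym_connect_sym symG.

Lemma uC : u \in Cs. Proof. by rewrite inE connect0. Qed.

Lemma wC : w \notin Cs.
Proof. by rewrite inE; apply/negP => h; apply: (tree_cut Tac eT uw h). Qed.

Lemma closC a b : a \in Cs -> adj (T :\ g) a b -> b \in Cs.
Proof. by rewrite !inE => h1 h2; apply: connect_trans h1 (connect1 h2). Qed.

Lemma closD a b : a \notin Cs -> adj (T :\ g) a b -> b \notin Cs.
Proof. by move=> h1 h2; apply/negP => hb; move: h1; rewrite (closC hb) // symG. Qed.

Lemma splitD z : z \notin Cs -> connect (adj (T :\ g)) w z.
Proof.
move=> zD.
suff : connect (adj (T :\ g)) u z || connect (adj (T :\ g)) w z.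
  by case/orP => // h; move: zD; rewrite inE h.
apply: (connect_closed' (P := fun z => connect (adj (T :\ g)) u z || connect (adj (T :\ g)) w z) _ (Tcon u z));
  last by rewrite connect0.
move=> a b h hab.
case: (eqVneq [set a; b] g) => hg.
  have : b \in g by rewrite -hg !inE eqxx orbT.
  by rewrite !inE => /orP[]/eqP->; rewrite connect0 ?orbT.
have hab' : adj (T :\ g) a b by rewrite adjD1 hg.
by case/orP: h => h; rewrite (connect_trans h (connect1 hab')) ?orbT.
Qed.

Lemma D_conn (h : {set V}) z : {subset h <= Cs} -> z \notin Cs -> connect (adj (T :\ h)) w z.
Proof.
move=> hC zD; apply: (connect_mono_inv (P := fun z => z \notin Cs)) (splitD zD); last exact: wC.
move=> a b aD hab; rewrite (closD aD hab) /=.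
move: hab; rewrite !adjD1 => /andP[_ ->]; rewrite andbT.
by apply/eqP => habh; move: aD; rewrite hC // -habh !inE eqxx.
Qed.

Definition SC (z : subV T) := match z with inl a => a \in Cs | inr f => val f \subset Cs end.
Definition SD (z : subV T) := match z with inl a => a \notin Cs | inr f => ~~ (val f \subset Cs) end.

Lemma SCD z : SC z -> SD z -> False.
Proof. by case: z => [a|f] /= ->. Qed.


Lemma mk p q : p \in Cs -> q \notin Cs -> [set p; q] \notin T -> (internal T r u -> p != u) ->
  exists x y, [/\ end_img T r p q x, end_img T r q p y, SC x, SD y &
     on_tree_path (sub_tree T) x y [set inl u; inr e]].
Proof.
move=> pC qD lT hpu.
have cpu : connect (adj (T :\ g)) p u by rewrite cs; move: pC; rewrite inE.
case/connectP: cpu => pp0 pth0 lu0.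
move: lu0; case: (shortenP pth0) => p1 pth1 u1 _ lu1.
case/connectP: (splitD qD) => qq0 qth0 lq0.
move: lq0; case: (shortenP qth0) => p2 pth2 u2 _ lq2.
have allC := path_closed (P := fun z => z \in Cs) closC pth1 pC.
have allD := path_closed (P := fun z => z \notin Cs) closD pth2 wC.
have subTg : subrel (adj (T :\ g)) (adj T) by move=> a b; rewrite adjD1 => /andP[].
set P := p1 ++ w :: p2.
have pathP : path (adj T) p P.
  rewrite cat_path (sub_path subTg pth1) -lu1 /= (sub_path subTg pth2) andbT.
  exact: eT.
have uniqP : uniq (p :: P).
  rewrite -cat_cons cat_uniq u1 u2 andbT andTb.
  apply/hasPn => z zs; apply/negP => zs'.
  have zC : z \in Cs by move: zs'; rewrite inE => /orP[/eqP->//|/(allP allC)].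
  have zD : z \notin Cs by move: zs; rewrite inE => /orP[/eqP->|/(allP allD)] //; exact: wC.
  by rewrite zC in zD.
have lastP : last p P = q by rewrite last_cat -lu1 /= lq2.
have Pn : P != [::] by rewrite /P -size_eq0 size_cat /= addnS.
have stepuw : step T u w = [:: inr e; inl w].
  by rewrite (step_T eT); congr [:: inr _; _]; apply: val_inj; rewrite /= hew.
have liftP : lift T p P = lift T p p1 ++ [:: inr e, inl w & lift T w p2].
  by rewrite lift_cat -lu1 /= stepuw.
have ep : [set inl u; inr e] \in pairs (inl p :: lift T p P).
  apply/pairsP; exists (belast (inl p) (lift T p p1)), (inl u), (inr e), (inl w :: lift T w p2); split => //.
  by rewrite liftP -cat_cons [inl p :: lift T p p1]lastI lift_last -lu1 cat_rcons.
have gp := lift_path pathP.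
have up := lift_uniq T uniqP.
have [y [M [[hy SDy lM hM] [pM uM eM]]]] : exists y M,
   [/\ end_img T r q p y, SD y, last (inl p) M = y & (M = lift T p P \/ M = liftB T p P)] /\
   [/\ path (adj (sub_tree T)) (inl p) M, uniq (inl p :: M) &
       [set inl u; inr e] \in pairs (inl p :: M)].
  case: (boolP (internal T r q)) => iq.
  - have [G [lG qG pG]] := liftB_last (inl p) pathP Pn.
    rewrite lastP in qG.
    have hl := lift_liftB pathP Pn; rewrite lastP in hl.
    exists (inr G), (liftB T p P).
    have := otp_tail (F := sub_tree T) (x := inl p) (M := liftB T p P) (a := inl q) (e := [set inl u; inr e]).
    rewrite -hl => /(_ gp up ep) [].
      rewrite lG; apply/eqP => /set2_eq [[]|[[uq] _]] //.
      by move: qD; rewrite -uq uC.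
    move=> h1 h2 h3; split; last by split.
    split.
    + right; split => //; exists G; split => //.
      by apply: on_tree_path_sym; exists P; split.
    + by apply/negP => /subsetP /(_ q qG); rewrite (negbTE qD).
    + exact: lG.
    + by right.
  - exists (inl q), (lift T p P); split; last by split.
    split; [by left | by [] | by rewrite lift_last lastP | by left].
case: (boolP (internal T r p)) => ip.
- have pu : p != u by apply/eqP => pu; have := hpu; rewrite -pu => /(_ ip); rewrite eqxx.
  have [a1 [p1' hp1]] : exists a1 p1', p1 = a1 :: p1'.
    case: (p1) lu1 => [/= up'|a1 p1' _]; first by rewrite up' eqxx in pu.
    by exists a1, p1'.
  have a1C : a1 \in Cs by have := allP allC a1; rewrite hp1 inE eqxx => /(_ isT).
  have hpa : [set p; a1] \in T.
    by move: pth1; rewrite hp1 /= => /andP[+ _]; rewrite adjD1 => /andP[].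
  pose F0 : tedge T := Sub [set p; a1] hpa.
  have hP : P = a1 :: (p1' ++ w :: p2) by rewrite /P hp1.
  have [M' hM'] : exists M', M = inr F0 :: M'.
    case: hM => ->; rewrite hP; last exact: liftB_head.
    by rewrite (lift_head _ hpa); eexists.
  exists (inr F0), y; split => //.
  + right; split => //; exists F0; split => //=; first by rewrite !inE eqxx.
    exists P; split => //.
    by change ([set p; a1] \in pairs (p :: P)); rewrite hP pairs_cons2 mem_head.
  + by apply/subsetP => z /= /set2P [] ->.
  + rewrite hM' in pM lM uM eM.
    apply: (otp_head pM lM uM eM).
    by apply/eqP => /set2_eq [[[up'] _]|[[]]] //; rewrite up' eqxx in pu.
- by exists (inl p), y; split => //; [left | exists M; split].
Qed.

Lemma img_inj p1 q1 x1 y1 p2 q2 x2 y2 : p1 \in Cs -> p2 \in Cs -> q1 \notin Cs -> q2 \notin Cs ->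
  end_img T r p1 q1 x1 -> end_img T r q1 p1 y1 ->
  end_img T r p2 q2 x2 -> end_img T r q2 p2 y2 ->
  SC x1 -> SD y2 -> [set x1; y1] = [set x2; y2] -> [set p1; q1] = [set p2; q2].
Proof.
move=> p1C p2C q1D q2D hi1 hi2 hi3 hi4 sc sd /set2_eq [[ex ey]|[ex _]]; last first.
  by exfalso; apply: (SCD (z := x1)) => //; rewrite ex.
subst x2 y2.
have pp : p1 = p2.
  case: (same_img hi1 hi3) => // [[f [_ hf ne o1 o2]]].
  exfalso; rewrite hf in o1 o2.
  have fT : [set p1; p2] \in T by rewrite -hf (valP f).
  apply: (inj_core Tac fT ne o1 o2).
  have sub : {subset [set p1; p2] <= Cs} by move=> z /set2P [] ->.
  have c1 := D_conn sub q1D; have c2 := D_conn sub q2D.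
  apply: connect_trans _ c2; by rewrite (sym_connect_sym (adj_sym _)).
subst p2.
have qq : q1 = q2.
  case: (same_img hi2 hi4) => // [[f [_ hf ne o1 o2]]].
  exfalso; rewrite hf in o1 o2.
  have fT : [set q1; q2] \in T by rewrite -hf (valP f).
  exact: (inj_core Tac fT ne o1 o2 (connect0 _ _)).
by rewrite qq.
Qed.
End Edge.

Lemma part2 : forall e', e' \in sub_tree T ->
     exists l1 l2 l1' l2',
       [/\ l1 \in E :\: T, l2 \in E :\: T, corr T r l1 l1', corr T r l2 l2'
         & [/\ l1' != l2', on_link_path (sub_tree T) l1' e'
             & on_link_path (sub_tree T) l2' e']].
Proof.
move=> e' /mem_subtree [u [e [ue ->]]].
have [w [uw hew]] := card2_set2 (edgeT2 (valP e)) ue.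
pose C := Cs u w.
have uC' : u \in C := uC u w.
have wC' : w \notin C := wC hew uw.
pose U := [set f in E | u \in f].
pose iu := internal T r u.
pose Lk := if iu then Delta C :\: U else Delta C :\ [set u; w].
have eT' : [set u; w] \in T by rewrite -hew (valP e).
have gD : [set u; w] \in Delta C.
  rewrite inE (subsetP hTE _ eT') /=; apply/andP; split.
    by apply: (not_disjoint (x := u)); rewrite ?inE ?eqxx.
  by apply/negP => /subsetP /(_ w); rewrite in_set2 eqxx orbT (negbTE wC') => /(_ isT).
have good : forall l, l \in Lk -> l \in E :\: T /\ exists p q,
    [/\ l = [set p; q], p \in C, q \notin C & (iu -> p != u)].
  move=> l hl.
  have [lD lg hu] : [/\ l \in Delta C, l != [set u; w] & (iu -> u \notin l)].
    rewrite /Lk in hl; case: (boolP iu) hl => hiu.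
    - rewrite in_setD => /andP[hU lD']; split => //.
      + apply/eqP => lg; move: hU; rewrite lg inE (subsetP hTE _ eT') in_set2 eqxx.
        by [].
      + move=> _; apply/negP => ul; move: hU; rewrite inE ul andbT => /negP; apply.
        by move: lD'; rewrite inE => /andP[].
    - by rewrite in_setD1 => /andP[lg lD']; split.
  move: (lD); rewrite inE => /andP[lE /andP[/not_disjointP [p pl pC] /subsetPn [z zl zC]]].
  have [q [pq hl']] := card2_set2 (hE lE) pl.
  have qC : q \notin C.
    by move: zl; rewrite hl' in_set2 => /orP[]/eqP zz; [rewrite zz pC in zC | rewrite -zz].
  split.
    rewrite inE lE andbT; apply/negP => lT.
    have : adj (T :\ [set u; w]) p q by rewrite adjD1 /adj -hl' lg lT.
    by move/(closC pC); rewrite (negbTE qC).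
  exists p, q; split => // /hu; apply: contra => /eqP pu.
  by rewrite hl' -pu !inE eqxx.
have cardLk : 1 < #|Lk|.
  have c4 := cut4 uC' wC'.
  rewrite /Lk; case: (boolP iu) => hiu; last first.
    by move: c4; rewrite (cardsD1 [set u; w]) gD; move: (#|_ :\ _|) => n; clear; lia.
  pose Eu := [set f in T | u \in f].
  have eEu : [set u; w] \in Eu by rewrite inE eT' !inE eqxx.
  have Eu1 : 1 < #|Eu|.
    have := hiu; rewrite /iu /internal => /andP[_].
    have : 0 < #|Eu| by apply/card_gt0P; exists [set u; w].
    rewrite /deg -/Eu; move: (#|Eu|) => n; clear; lia.
  have [f2 [f2Eu f2g]] : exists f2, f2 \in Eu /\ f2 != [set u; w].
    case/card_gt1P: Eu1 => x [y [xE yE xy]].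
    case: (eqVneq x [set u; w]) => xg; last by exists x.
    by exists y; split => //; rewrite -xg eq_sym.
  move: f2Eu; rewrite inE => /andP[f2T uf2].
  have [z [uz hf2]] := card2_set2 (edgeT2 f2T) uf2.
  have zC : z \in C by apply: (closC uC'); rewrite adjD1 /adj -hf2 f2g f2T.
  pose K2 := C :\ u.
  have zK : z \in K2 by rewrite in_setD1 eq_sym uz zC.
  have wK : w \notin K2 by rewrite in_setD1 (negbTE wC') andbF.
  have c42 := cut4 zK wK.
  have hU : #|U| = 4 by rewrite -(h4 u).
  have sub1 : Delta K2 :\: U \subset Delta C :\: U.
    apply/subsetP => f; rewrite !in_setD => /andP[hU' fD2].
    rewrite hU' /=.
    move: fD2; rewrite inE => /andP[fE /andP[nd ns]].
    rewrite inE fE /=.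
    have uf : u \notin f by move: hU'; rewrite inE fE.
    apply/andP; split.
      case/not_disjointP: nd => a af; rewrite in_setD1 => /andP[_ aC].
      exact: not_disjoint af aC.
    case/subsetPn: ns => b bf; rewrite in_setD1 negb_and negbK => /orP[/eqP bu|bC].
      by rewrite -bu bf in uf.
    by apply/negP => /subsetP /(_ b bf); rewrite (negbTE bC).
  have disj : (Delta C :&: U) :&: (Delta K2 :&: U) = set0.
    apply/setP => f; rewrite !inE; apply/negP => /andP[/andP[/andP[fE /andP[_ ns]] /andP[_ uf]] /andP[/andP[_ /andP[nd _]] _]].
    have [y [uy hf]] := card2_set2 (hE fE) uf.
    case/not_disjointP: nd => a; rewrite hf !inE => /orP[]/eqP ->; first by rewrite eqxx.
    rewrite andbC => /andP[yC _].
    by move: ns; rewrite hf; apply/negP/negPn/subsetP => b; rewrite !inE => /orP[]/eqP->.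
  have sub2 : (Delta C :&: U) :|: (Delta K2 :&: U) \subset U.
    by apply/subsetP => f; rewrite !inE => /orP[]/andP[_ ->].
  have e1 := cardsID U (Delta C).
  have e2 := cardsID U (Delta K2).
  have e3 := cardsU (Delta C :&: U) (Delta K2 :&: U).
  rewrite disj cards0 subn0 in e3.
  have l1 := subset_leq_card sub1.
  have l2 := subset_leq_card sub2.
  rewrite e3 hU in l2.
  move: c4 c42 e1 e2 l1 l2.
  move: (#|Delta C|) (#|Delta K2|) (#|Delta C :&: U|) (#|Delta C :\: U|)
        (#|Delta K2 :&: U|) (#|Delta K2 :\: U|) => a b c d e0 f.
  clear; lia.
case/card_gt1P: cardLk => l1 [l2 [hl1 hl2 l12]].
have [l1ET [p1 [q1 [hl1' p1C q1D hp1]]]] := good _ hl1.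
have [l2ET [p2 [q2 [hl2' p2C q2D hp2]]]] := good _ hl2.
have nT1 : [set p1; q1] \notin T by rewrite -hl1'; move: l1ET; rewrite inE => /andP[].
have nT2 : [set p2; q2] \notin T by rewrite -hl2'; move: l2ET; rewrite inE => /andP[].
have [x1 [y1 [ex1 ey1 sx1 sy1 o1]]] := mk hew uw p1C q1D nT1 hp1.
have [x2 [y2 [ex2 ey2 sx2 sy2 o2]]] := mk hew uw p2C q2D nT2 hp2.
have ne_pq a b : a \in C -> b \notin C -> a != b.
  by move=> aC bD; apply/eqP => ab; rewrite -ab aC in bD.
exists l1, l2, [set x1; y1], [set x2; y2]; split => //.
- exists p1, q1; split => //; first exact: ne_pq.
  by exists x1, y1.
- exists p2, q2; split => //; first exact: ne_pq.
  by exists x2, y2.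
split.
- apply/eqP => h; move/eqP: l12; apply.
  by rewrite hl1' hl2'; apply: (img_inj hew uw p1C p2C q1D q2D ex1 ey1 ex2 ey2 sx1 sy2 h).
- exists x1, y1; split => //; apply/eqP => xy; subst y1.
  exact: (SCD sx1 sy1).
- exists x2, y2; split => //; apply/eqP => xy; subst y2.
  exact: (SCD sx2 sy2).
Qed.
End Part2.

Unset Implicit Arguments.

Theorem lemma15 (V : finType) (E T : {set {set V}}) (r : V) :
  is_edgeset E ->
  (forall v : V, deg E v = 4) ->
  k_edge_connected 4 E ->
  T \subset E -> is_tree T ->
  (forall v : V, deg T v != 4) ->
  deg T r = 1 ->
  (* (1) *)
  (forall F' : {set {set subV T}},
     (forall l', l' \in F' -> exists l, l \in E :\: T /\ corr T r l l') ->
     k_edge_connected 2 (sub_tree T :|: F') ->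
     forall F : {set {set V}}, F \subset E :\: T ->
     (forall l, l \in E :\: T -> (l \in F <-> exists l', l' \in F' /\ corr T r l l')) ->
     k_vertex_connected 2 (T :|: F))
  /\
  (* (2) *)
  (forall e', e' \in sub_tree T ->
     exists l1 l2 l1' l2',
       [/\ l1 \in E :\: T, l2 \in E :\: T, corr T r l1 l1', corr T r l2 l2'
         & [/\ l1' != l2', on_link_path (sub_tree T) l1' e'
             & on_link_path (sub_tree T) l2' e']]).
Proof.
move=> hE h4 hk4 hTE hT hT4 hr; split.
- exact: part1 hE h4 hTE hT hT4 hr.
- case: hT => Tcon Tac.
  exact: (part2 r hE h4 hk4 hTE Tcon Tac).
Qed.
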